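(* Let $D^k$ be a vertically mapped wedge with $J^k>0$. Define $(\bm S^k_z)_{ij,i'j'}=\int_{\widehat W}\frac{\partial\phi_{i'j'}}{\partial z}\,\ell_{ij}\,J^k$, where $\phi_{i'j'}=\ell_{i'j'}\circ(\bm\Phi^k)^{-1}$, and $\bm D^k_z=(\bm M^k)^{-1}\bm S^k_z$. Then $$\bm D^k_z=\bm L^{\mathrm{tri},k}\otimes\big(t_zJ^k\,\bm D^{\mathrm{1D}}_t\big),$$ where $t_zJ^k$ is the (constant) product of the geometric factor $t_z=\partial t/\partial z$ with $J^k$, and $\bm L^{\mathrm{tri},k}=(\bm M^{\mathrm{tri},k})^{-1}\widehat{\bm M}^{\mathrm{tri}}$.
   Context: Reference wedge $\widehat W=\widehat T\times[0,1]$ with $\widehat T=\{(r,s):r,s\ge0,\ r+s\le1\}$. Vertex functions $v_1=(1-r-s)(1-t)$, $v_2=r(1-t)$, $v_3=s(1-t)$, $v_4=(1-r-s)t$, $v_5=rt$, $v_6=st$; a wedge $D^k$ is the image of $\widehat W$ under $\bm{\Phi}^k=\sum_{i=1}^6\bm{\nu}_iv_i$ with vertices $\bm{\nu}_i\in\mathbb{R}^3$, $(x,y,z)=\bm\Phi^k(r,s,t)$, and $J^k=\det[\partial_r\bm{\Phi}^k,\partial_s\bm{\Phi}^k,\partial_t\bm{\Phi}^k]$. It is vertically mapped if the pairs $(\bm{\nu}_1,\bm{\nu}_4)$, $(\bm{\nu}_2,\bm{\nu}_5)$, $(\bm{\nu}_3,\bm{\nu}_6)$ each have identical $x$- and $y$-coordinates.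 Geometric factors $r_z=\partial r/\partial z$, $t_z=\partial t/\partial z$, etc., are entries of the inverse Jacobian matrix of $\bm\Phi^k$. Nodal basis: fix $N\ge1$, points $(r_i,s_i)$, $i=1,\dots,(N+1)(N+2)/2$, in $\widehat T$ unisolvent for polynomials of total degree $\le N$ with Lagrange basis $\ell^{\mathrm{tri}}_i$, and Gauss–Legendre–Lobatto points $0=t_0<\dots<t_N=1$ with Lagrange basis $\ell^{\mathrm{1D}}_j$; $\ell_{ij}=\ell^{\mathrm{tri}}_i(r,s)\ell^{\mathrm{1D}}_j(t)$. Matrices indexed by $(i,j)$ are ordered with $i$ the slow index, so $(\bm A\otimes\bm B)_{ij,i'j'}=\bm A_{ii'}\bm B_{jj'}$. Definitions: $(\bm M^k)_{ij,i'j'}=\int_{\widehat W}\ell_{ij}\ell_{i'j'}J^k$; $(\bm M^{\mathrm{tri},k})_{ii'}=\int_{\widehat T}\ell^{\mathrm{tri}}_i\ell^{\mathrm{tri}}_{i'}J^k(r,s)$ (where $J^k$ is independent of $t$ for vertically mapped wedges); $(\widehat{\bm M}^{\mathrm{tri}})_{ii'}=\int_{\widehat T}\ell^{\mathrm{tri}}_i\ell^{\mathrm{tri}}_{i'}$; $(\bm D^{\mathrm{1D}}_t)_{jj'}=(\ell^{\mathrm{1D}}_{j'})'(t_j)$. *)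

(* Defs.v *)
From Stdlib Require Import Reals Lra Lia List Classical ClassicalEpsilon ClassicalDescription.
Import ListNotations.
Open Scope R_scope.

(* Riemann integral of f over [a,b] (value of RiemannInt when f is
   Riemann integrable; 0 otherwise — never used for non-integrable f). *)
Definition Rint (f : R -> R) (a b : R) : R :=
  match excluded_middle_informative
          (exists v, exists pr : Riemann_integrable f a b, RiemannInt pr = v) with
  | left H => proj1_sig (constructive_indefinite_description _ H)
  | right _ => 0
  end.

(* derivative of f at x (when it exists; 0 otherwise) *)
Definition Deriv (f : R -> R) (x : R) : R :=
  match excluded_middle_informative (exists l, derivable_pt_lim f x l) with
  | left H => proj1_sig (constructive_indefinite_description _ H)
  | right _ => 0
  end.

Definition d_r (F : R -> R -> R -> R) r s t := Deriv (fun u => F u s t) r.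
Definition d_s (F : R -> R -> R -> R) r s t := Deriv (fun u => F r u t) s.
Definition d_t (F : R -> R -> R -> R) r s t := Deriv (fun u => F r s u) t.

Definition inT (r s : R) : Prop := 0 <= r /\ 0 <= s /\ r + s <= 1.
Definition inW (r s t : R) : Prop := inT r s /\ 0 <= t <= 1.

Definition Tint (g : R -> R -> R) : R :=
  Rint (fun r => Rint (fun s => g r s) 0 (1 - r)) 0 1.

Definition Wint (f : R -> R -> R -> R) : R :=
  Rint (fun t => Tint (fun r s => f r s t)) 0 1.

Definition vfun (i : nat) (r s t : R) : R :=
  match i with
  | 1%nat => (1 - r - s) * (1 - t)
  | 2%nat => r * (1 - t)
  | 3%nat => s * (1 - t)
  | 4%nat => (1 - r - s) * t
  | 5%nat => r * t
  | 6%nat => s * t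
  | _ => 0
  end.

(* one coordinate of Phi = sum_{i=1}^6 nu_i v_i, given that coordinate of the vertices *)
Definition Phic (nu : nat -> R) (r s t : R) : R :=
  fold_right (fun i acc => nu i * vfun i r s t + acc) 0 [1;2;3;4;5;6]%nat.

Definition Jac (vx vy vz : nat -> R) (r s t : R) : R :=
  let X := Phic vx in let Y := Phic vy in let Z := Phic vz in
  let xr := d_r X r s t in let xs := d_s X r s t in let xt := d_t X r s t in
  let yr := d_r Y r s t in let ys := d_s Y r s t in let yt := d_t Y r s t in
  let zr := d_r Z r s t in let zs := d_s Z r s t in let zt := d_t Z r s t in
  xr * (ys * zt - yt * zs) - xs * (yr * zt - yt * zr) + xt * (yr * zs - ys * zr).

(* geometric factors r_z, s_z, t_z: the (r,z),(s,z),(t,z) entries of the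
   inverse of the Jacobian matrix d(x,y,z)/d(r,s,t) (adjugate / determinant) *)
Definition geo_rz (vx vy vz : nat -> R) (r s t : R) : R :=
  let X := Phic vx in let Y := Phic vy in
  (d_s X r s t * d_t Y r s t - d_t X r s t * d_s Y r s t) / Jac vx vy vz r s t.
Definition geo_sz (vx vy vz : nat -> R) (r s t : R) : R :=
  let X := Phic vx in let Y := Phic vy in
  (d_t X r s t * d_r Y r s t - d_r X r s t * d_t Y r s t) / Jac vx vy vz r s t.
Definition geo_tz (vx vy vz : nat -> R) (r s t : R) : R :=
  let X := Phic vx in let Y := Phic vy in
  (d_r X r s t * d_s Y r s t - d_s X r s t * d_r Y r s t) / Jac vx vy vz r s t.

Definition vertically_mapped (vx vy : nat -> R) : Prop :=
  vx 1%nat = vx 4%nat /\ vy 1%nat = vy 4%nat /\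
  vx 2%nat = vx 5%nat /\ vy 2%nat = vy 5%nat /\
  vx 3%nat = vx 6%nat /\ vy 3%nat = vy 6%nat.

(* (d phi / d z) o Phi for phi = l o Phi^{-1}, by the chain rule *)
Definition dz_ref (vx vy vz : nat -> R) (l : R -> R -> R -> R) (r s t : R) : R :=
  geo_rz vx vy vz r s t * d_r l r s t + geo_sz vx vy vz r s t * d_s l r s t
  + geo_tz vx vy vz r s t * d_t l r s t.

Definition Np (N : nat) : nat := ((N + 1) * (N + 2) / 2)%nat.

Definition delta {I : Type} (a b : I) : R :=
  if excluded_middle_informative (a = b) then 1 else 0.

Definition poly2 (N : nat) (p : R -> R -> R) : Prop :=
  exists c : nat -> nat -> R, forall r s,
    p r s = fold_right (fun a acc =>
              fold_right (fun b acc' => c a b * r ^ a * s ^ b + acc') 0 (seq 0 (N - a + 1))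
              + acc) 0 (seq 0 (N + 1)).

Definition unisolvent (N : nat) (rp sp : nat -> R) : Prop :=
  forall p, poly2 N p -> (forall i, (i < Np N)%nat -> p (rp i) (sp i) = 0) ->
  forall r s, p r s = 0.

Definition lagrange_tri (N : nat) (rp sp : nat -> R) (ltri : nat -> R -> R -> R) : Prop :=
  forall i, (i < Np N)%nat ->
    poly2 N (ltri i) /\
    forall i', (i' < Np N)%nat -> ltri i (rp i') (sp i') = delta i i'.

(* Legendre polynomials on [-1,1] by Bonnet's recurrence *)
Fixpoint legendre2 (n : nat) (x : R) : R * R :=   (* (P_n x, P_{n+1} x) *)
  match n with
  | O => (1, x)
  | S m => let (a, b) := legendre2 m x in
           (b, ((2 * INR m + 3) * x * b - (INR m + 1) * a) / (INR m + 2))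
  end.
Definition legendre (n : nat) (x : R) : R := fst (legendre2 n x).

(* Gauss-Legendre-Lobatto points 0 = t_0 < ... < t_N = 1 on [0,1]:
   interior points are the roots of P_N'(2t-1) *)
Definition GLL (N : nat) (tp : nat -> R) : Prop :=
  tp 0%nat = 0 /\ tp N = 1 /\
  (forall j, (j < N)%nat -> tp j < tp (S j)) /\
  (forall j, (0 < j < N)%nat -> derivable_pt_lim (legendre N) (2 * tp j - 1) 0).

Definition lag1 (N : nat) (tp : nat -> R) (j : nat) (t : R) : R :=
  fold_right (fun m acc =>
     (if Nat.eq_dec m j then 1 else (t - tp m) / (tp j - tp m)) * acc) 1 (seq 0 (N + 1)).

Definition D1D (N : nat) (tp : nat -> R) (j j' : nat) : R :=
  Deriv (lag1 N tp j') (tp j).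

Definition lbasis (N : nat) (tp : nat -> R) (ltri : nat -> R -> R -> R)
  (ij : nat * nat) (r s t : R) : R :=
  ltri (fst ij) r s * lag1 N tp (snd ij) t.

Definition msum {I : Type} (l : list I) (f : I -> R) : R :=
  fold_right (fun k acc => f k + acc) 0 l.

Definition mmul {I : Type} (l : list I) (A B : I -> I -> R) : I -> I -> R :=
  fun a b => msum l (fun k => A a k * B k b).

Definition is_inverse {I : Type} (l : list I) (A B : I -> I -> R) : Prop :=
  forall a b, In a l -> In b l ->
    mmul l A B a b = delta a b /\ mmul l B A a b = delta a b.

Definition minv {I : Type} (l : list I) (A : I -> I -> R) : I -> I -> R :=
  match excluded_middle_informative (exists B, is_inverse l A B) with
  | left H => proj1_sig (constructive_indefinite_description _ H)
  | right _ => fun _ _ => 0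
  end.

Definition kron (A B : nat -> nat -> R) : nat * nat -> nat * nat -> R :=
  fun ij ij' => A (fst ij) (fst ij') * B (snd ij) (snd ij').

Definition idx_tri (N : nat) : list nat := seq 0 (Np N).
Definition idx_W (N : nat) : list (nat * nat) := list_prod (idx_tri N) (seq 0 (N + 1)).

Definition Mk (N : nat) tp ltri vx vy vz : nat * nat -> nat * nat -> R :=
  fun a b => Wint (fun r s t =>
    lbasis N tp ltri a r s t * lbasis N tp ltri b r s t * Jac vx vy vz r s t).

Definition Szk (N : nat) tp ltri vx vy vz : nat * nat -> nat * nat -> R :=
  fun a b => Wint (fun r s t =>
    dz_ref vx vy vz (lbasis N tp ltri b) r s t * lbasis N tp ltri a r s t
    * Jac vx vy vz r s t).

Definition Dzk (N : nat) tp ltri vx vy vz : nat * nat -> nat * nat -> R :=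
  mmul (idx_W N) (minv (idx_W N) (Mk N tp ltri vx vy vz)) (Szk N tp ltri vx vy vz).

(* J^k(r,s): for vertically mapped wedges J is independent of t; evaluated at t=0 *)
Definition Mtrik (ltri : nat -> R -> R -> R) vx vy vz : nat -> nat -> R :=
  fun i i' => Tint (fun r s => ltri i r s * ltri i' r s * Jac vx vy vz r s 0).

Definition Mhattri (ltri : nat -> R -> R -> R) : nat -> nat -> R :=
  fun i i' => Tint (fun r s => ltri i r s * ltri i' r s).

Definition Ltrik (N : nat) ltri vx vy vz : nat -> nat -> R :=
  mmul (idx_tri N) (minv (idx_tri N) (Mtrik ltri vx vy vz)) (Mhattri ltri).

(* Main.v *)
Require Import Defs.
From Stdlib Require Import Reals List Lra Lia FunctionalExtensionality Classical ClassicalEpsilon ClassicalDescription.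
From Coquelicot Require Import Coquelicot.
Import ListNotations.
Open Scope R_scope.


Lemma Rint_ex f a b : ex_RInt f a b -> Rint f a b = RInt f a b.
Proof.
  intro Hex. unfold Rint.
  destruct (excluded_middle_informative _) as [H|H].
  - destruct (constructive_indefinite_description _ H) as [v Hv]; simpl.
    destruct Hv as [pr <-]. symmetry; apply RInt_Reals.
  - exfalso; apply H. exists (RiemannInt (ex_RInt_Reals_0 _ _ _ Hex)).
    exists (ex_RInt_Reals_0 _ _ _ Hex). reflexivity.
Qed.

Lemma Rint_nex f a b : ~ ex_RInt f a b -> Rint f a b = 0.
Proof.
  intro Hn. unfold Rint.
  destruct (excluded_middle_informative _) as [H|H]; [|reflexivity].
  exfalso. destruct H as [v [pr _]]. apply Hn. now apply ex_RInt_Reals_1.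
Qed.

Lemma Rint_ext f g a b : a <= b -> (forall x, a < x < b -> f x = g x) ->
  Rint f a b = Rint g a b.
Proof.
  intros Hab H.
  assert (H' : forall x, Rmin a b < x < Rmax a b -> f x = g x).
  { rewrite Rmin_left, Rmax_right by lra. exact H. }
  assert (H'' : forall x, Rmin a b < x < Rmax a b -> g x = f x).
  { intros; symmetry; auto. }
  destruct (classic (ex_RInt f a b)) as [Hf|Hf].
  - rewrite !Rint_ex; auto. now apply RInt_ext. now apply (ex_RInt_ext f).
  - rewrite !Rint_nex; auto. intro Hg. apply Hf. now apply (ex_RInt_ext g).
Qed.

Lemma Rint_scal k f a b : Rint (fun x => k * f x) a b = k * Rint f a b.
Proof.
  destruct (Req_dec k 0) as [Hk|Hk].
  - subst k. replace (fun x => 0 * f x) with (fun _ : R => 0)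
      by (apply functional_extensionality; intro; ring).
    rewrite Rint_ex by apply ex_RInt_const. rewrite RInt_const.
    unfold scal; simpl; unfold mult; simpl. ring.
  - destruct (classic (ex_RInt f a b)) as [Hf|Hf].
    + rewrite !Rint_ex; auto.
      * exact (RInt_scal f a b k Hf).
      * exact (ex_RInt_scal f a b k Hf).
    + rewrite !Rint_nex; auto. ring.
      intro Hg. apply Hf.
      apply (ex_RInt_ext (fun y => scal (/k) (k * f y))).
      { intros x _. unfold scal; simpl; unfold mult; simpl. field. auto. }
      exact (ex_RInt_scal (fun y => k * f y) a b (/k) Hg).
Qed.

Lemma Deriv_unique f x l : derivable_pt_lim f x l -> Deriv f x = l.
Proof.
  intro H. unfold Deriv.
  destruct (excluded_middle_informative _) as [H1|H1].
  - destruct (constructive_indefinite_description _ H1) as [v Hv]; simpl.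
    eapply uniqueness_limite; eauto.
  - exfalso; apply H1; eauto.
Qed.

Section Msum.
Context {I : Type}.

Lemma msum_nil (f : I -> R) : msum [] f = 0.
Proof. reflexivity. Qed.
Lemma msum_cons (x : I) l f : msum (x :: l) f = f x + msum l f.
Proof. reflexivity. Qed.

Lemma msum_ext (l : list I) f g : (forall k, In k l -> f k = g k) -> msum l f = msum l g.
Proof.
  induction l as [|x l IH]; intro H; [reflexivity|]. rewrite !msum_cons.
  rewrite (H x) by (left; auto). rewrite IH; auto. intros; apply H; right; auto.
Qed.

Lemma msum_plus (l : list I) f g : msum l (fun k => f k + g k) = msum l f + msum l g.
Proof. induction l; rewrite ?msum_cons, ?msum_nil; [ring|]. rewrite IHl; ring. Qed.

Lemma msum_scal_l (l : list I) c f : msum l (fun k => c * f k) = c * msum l f.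
Proof. induction l; rewrite ?msum_cons, ?msum_nil; [ring|]. rewrite IHl; ring. Qed.

Lemma msum_scal_r (l : list I) c f : msum l (fun k => f k * c) = msum l f * c.
Proof. induction l; rewrite ?msum_cons, ?msum_nil; [ring|]. rewrite IHl; ring. Qed.

Lemma msum_zero (l : list I) : msum l (fun _ => 0) = 0.
Proof. induction l; rewrite ?msum_cons, ?msum_nil; [ring|]. rewrite IHl; ring. Qed.

Lemma msum_app (l1 l2 : list I) f : msum (l1 ++ l2) f = msum l1 f + msum l2 f.
Proof. induction l1; rewrite <-?app_comm_cons, ?msum_cons, ?app_nil_l, ?msum_nil; [ring|]. rewrite IHl1; ring. Qed.

Lemma msum_delta_r (l : list I) f b : NoDup l -> In b l ->
  msum l (fun k => f k * delta k b) = f b.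
Proof.
  induction l as [|x l IH]; intros Hnd Hin; [destruct Hin|].
  inversion Hnd; subst. rewrite msum_cons.
  destruct Hin as [<-|Hin].
  - rewrite (msum_ext _ _ (fun _ => 0)). rewrite msum_zero.
    unfold delta. destruct (excluded_middle_informative (x = x)); [ring|tauto].
    intros k Hk. unfold delta. destruct (excluded_middle_informative (k = x)); [subst; tauto| ring].
  - rewrite IH; auto. unfold delta. destruct (excluded_middle_informative (x = b)); [subst; tauto|ring].
Qed.

Lemma msum_delta_l (l : list I) f a : NoDup l -> In a l ->
  msum l (fun k => delta a k * f k) = f a.
Proof.
  intros. rewrite <- (msum_delta_r l f a) by auto. apply msum_ext; intros k _.
  unfold delta. destruct (excluded_middle_informative (a = k)), (excluded_middle_informative (k = a)); subst; try tauto; ring.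
Qed.

End Msum.

Lemma msum_map {I J : Type} (g : I -> J) (l : list I) f : msum (map g l) f = msum l (fun k => f (g k)).
Proof. induction l; [reflexivity|]. cbn [map]. rewrite !msum_cons, IHl; auto. Qed.

Lemma msum_swap {I J : Type} (l1 : list I) (l2 : list J) f :
  msum l1 (fun i => msum l2 (fun j => f i j)) = msum l2 (fun j => msum l1 (fun i => f i j)).
Proof.
  induction l1 as [|x l1 IH].
  - rewrite msum_nil. symmetry; apply msum_zero.
  - rewrite msum_cons, IH. rewrite <- msum_plus. apply msum_ext; intros; rewrite msum_cons; reflexivity.
Qed.

Lemma msum_prod {I J : Type} (l1 : list I) (l2 : list J) f :
  msum (list_prod l1 l2) f = msum l1 (fun i => msum l2 (fun j => f (i, j))).
Proof.
  induction l1 as [|x l1 IH]; [reflexivity|]. cbn [list_prod]. rewrite msum_cons.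
  rewrite msum_app, msum_map, IH. reflexivity.
Qed.

Lemma NoDup_prod {I J : Type} (l1 : list I) (l2 : list J) :
  NoDup l1 -> NoDup l2 -> NoDup (list_prod l1 l2).
Proof.
  induction l1 as [|x l1 IH]; intros H1 H2; cbn [list_prod]; [constructor|].
  inversion H1; subst. apply NoDup_app; auto.
  - apply NoDup_map_NoDup_ForallPairs; auto. intros a b _ _ E; now inversion E.
  - intros [a b] Ha Hb. apply in_map_iff in Ha. destruct Ha as [y [E _]]. inversion E; subst.
    apply in_prod_iff in Hb. tauto.
Qed.

Lemma mmul_assoc {I : Type} (l : list I) A B C a b :
  mmul l (mmul l A B) C a b = mmul l A (mmul l B C) a b.
Proof.
  unfold mmul.
  rewrite (msum_ext l (fun k => msum l (fun m => A a m * B m k) * C k b)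
             (fun k => msum l (fun m => A a m * B m k * C k b)))
    by (intros; rewrite <- msum_scal_r; reflexivity).
  rewrite msum_swap. apply msum_ext; intros m _.
  rewrite <- msum_scal_l. apply msum_ext; intros; ring.
Qed.

Lemma inverse_unique {I : Type} (l : list I) K X Y : NoDup l ->
  is_inverse l K X -> is_inverse l K Y -> forall a b, In a l -> In b l -> X a b = Y a b.
Proof.
  intros Hnd HX HY a b Ha Hb.
  transitivity (mmul l X (mmul l K Y) a b).
  - unfold mmul at 1. rewrite <- (msum_delta_r l (fun k => X a k) b) by auto.
    apply msum_ext; intros k Hk. f_equal. symmetry. apply (HY k b Hk Hb).
  - rewrite <- mmul_assoc. unfold mmul at 1.
    rewrite <- (msum_delta_l l (fun k => Y k b) a) by auto.
    apply msum_ext; intros k Hk. f_equal. apply (HX a k Ha Hk).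
Qed.

Lemma minv_spec {I : Type} (l : list I) A : (exists B, is_inverse l A B) -> is_inverse l A (minv l A).
Proof.
  intro H. unfold minv. destruct (excluded_middle_informative _) as [H1|H1]; [|tauto].
  destruct (constructive_indefinite_description _ H1); simpl; auto.
Qed.

Lemma minv_none {I : Type} (l : list I) A : ~ (exists B, is_inverse l A B) -> minv l A = fun _ _ => 0.
Proof.
  intro H. unfold minv. destruct (excluded_middle_informative _) as [H1|H1]; tauto.
Qed.

Module MC.
From mathcomp Require Import all_boot all_algebra.
From mathcomp Require Import Rstruct zify.
Import GRing.Theory.

Lemma seq_iota a n : List.seq a n = iota a n.
Proof. elim: n a => [|n IH] a //=; by rewrite IH. Qed.

Lemma msum_big (I : Type) (l : list I) (F : I -> R) : msum l F = (\sum_(k <- l) F k)%R.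
Proof.
  elim: l => [|x l IH]; first by rewrite big_nil.
  by rewrite big_cons msum_cons IH RplusE.
Qed.

Definition lagF (tp : nat -> R) (j m : nat) : {poly R} :=
  if Nat.eq_dec m j then 1%R else ((/ (tp j - tp m)) *: ('X - (tp m)%:P))%R.

Definition lagP (N : nat) (tp : nat -> R) (j : nat) : {poly R} :=
  (\prod_(m <- List.seq 0 (Nat.add N 1)) lagF tp j m)%R.

Lemma lag_horner N tp j t : lag1 N tp j t = (lagP N tp j).[t]%R.
Proof.
  rewrite /lag1 /lagP. elim: (List.seq 0 (Nat.add N 1)) => [|m l IH].
  - by rewrite big_nil hornerC.
  - rewrite big_cons hornerM -IH. cbn [fold_right]. rewrite RmultE. congr (_ * _)%R.
    rewrite /lagF. destruct (Nat.eq_dec m j); first by rewrite hornerC.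
    rewrite hornerZ hornerXsubC /Rdiv RmultE mulrC. by rewrite RminusE.
Qed.

Lemma horner_derive (P : {poly R}) t : derivable_pt_lim (fun x => P.[x]%R) t (P^`()).[t]%R.
Proof.
  elim/poly_ind: P t => [|p c IH] t.
  - rewrite deriv0 horner0.
    have -> : (fun x => (0:{poly R}).[x]%R) = fun _ => R0.
    { apply functional_extensionality => x. by rewrite horner0. }
    apply derivable_pt_lim_const.
  - have -> : (fun x => (p * 'X + c%:P).[x]%R) = fun x => Rplus (Rmult p.[x]%R x) c.
    { apply functional_extensionality => x. by rewrite hornerMXaddC RplusE RmultE. }
    rewrite derivMXaddC hornerD hornerMX.
    have H := derivable_pt_lim_plus _ _ t _ _
       (derivable_pt_lim_mult _ _ t _ _ (IH t) (derivable_pt_lim_id t)) (derivable_pt_lim_const c t).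
    have E : @eq R (p.[t] + p^`().[t] * t)%R (Rplus (Rplus (Rmult (p^`().[t])%R (id t)) (Rmult p.[t]%R R1)) R0).
    { rewrite -!RplusE -!RmultE /id. ring. }
    rewrite E. exact H.
Qed.

Lemma size_lagprod tp k l : (size (\prod_(m <- l) lagF tp k m)%R <= (count (fun m => m != k) l).+1)%N.
Proof.
  elim: l => [|m l IH]; first by rewrite big_nil size_poly1.
  rewrite big_cons /=.
  apply: leq_trans (size_polyMleq _ _) _.
  have Hm : (size (lagF tp k m) <= (m != k).+1)%N.
  { rewrite /lagF; destruct (Nat.eq_dec m k) as [->|ne].
    - by rewrite eqxx size_poly1.
    - have -> : (m != k) = true by apply/eqP.
      apply: leq_trans (size_scale_leq _ _) _. by rewrite size_XsubC. }
  have := leq_add Hm IH. move: IH Hm. set c := count _ l. case: (m != k) => /= _ _ H; rewrite -subn1 leq_subLR; apply: (leq_trans H); lia.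
Qed.

Lemma count_ne_lt (k : nat) l : k \in l -> (count (fun m => m != k) l < size l)%N.
Proof.
  move=> Hk. rewrite -(count_predC (fun m => m != k) l).
  have : (0 < count (predC (fun m => m != k)) l)%N.
  { rewrite -has_count. apply/hasP. exists k => //=. by rewrite eqxx. }
  lia.
Qed.

Lemma size_sum_le (I : Type) (l : seq I) (F : I -> {poly R}) n :
  (forall k, List.In k l -> (size (F k) <= n)%N) -> (size (\sum_(k <- l) F k)%R <= n)%N.
Proof.
  elim: l => [|x l IH] H; first by rewrite big_nil size_poly0.
  rewrite big_cons. apply: leq_trans (size_polyD _ _) _.
  rewrite geq_max H /=; last by left.
  apply IH => k Hk; apply H; by right.
Qed.

Lemma lag_interp N tp
 (Hinj : forall a b, (a <= N)%coq_nat -> (b <= N)%coq_nat -> tp a = tp b -> a = b)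
 (Hdelta : forall k m, (k <= N)%coq_nat -> (m <= N)%coq_nat -> lag1 N tp k (tp m) = delta k m) j t :
 Deriv (lag1 N tp j) t = msum (List.seq 0 (Nat.add N 1)) (fun k => Rmult (Deriv (lag1 N tp j) (tp k)) (lag1 N tp k t)).
Proof.
  have Dj : forall x, Deriv (lag1 N tp j) x = ((lagP N tp j)^`()).[x]%R.
  { move=> x; apply Deriv_unique.
    have -> : lag1 N tp j = fun y => (lagP N tp j).[y]%R.
    { apply functional_extensionality => y. apply lag_horner. }
    apply horner_derive. }
  set D := (lagP N tp j)^`()%R.
  set l := List.seq 0 (Nat.add N 1).
  have Hl : forall m, (m \in l) = (m < N.+1)%N.
  { move=> m. rewrite /l seq_iota mem_iota add0n. lia. }
  have HIn : forall m, (m < N.+1)%N -> List.In m l.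
  { move=> m Hm. rewrite /l in_seq. lia. }
  have HD : D = (\sum_(k <- l) D.[tp k] *: lagP N tp k)%R.
  { apply/eqP. rewrite -subr_eq0. set Q := (D - _)%R. apply/negPn/negP => Qn0.
    have := max_poly_roots (rs := map tp l) Qn0.
    have Hall : all (root Q) (map tp l).
    { apply/allP => x /mapP [m Hm ->]. rewrite /root /Q hornerD hornerN horner_sum.
      have -> : (\sum_(k <- l) (D.[tp k] *: lagP N tp k).[tp m])%R
                = msum l (fun k => Rmult (D.[tp k])%R (delta k m)).
      { rewrite msum_big. apply: eq_big_seq => k Hk.
        rewrite hornerZ -lag_horner Hdelta; first by rewrite RmultE.
        - rewrite Hl in Hk. lia.
        - rewrite Hl in Hm. lia. }
      rewrite msum_delta_r; first by rewrite subrr.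
      - apply seq_NoDup.
      - apply HIn. by rewrite -Hl. }
    have Huniq : uniq (map tp l).
    { rewrite map_inj_in_uniq; first by rewrite /l seq_iota iota_uniq.
      move=> a b; rewrite !Hl => Ha Hb E. apply Hinj => //; lia. }
    move=> /(_ Hall Huniq).
    have Hs : size l = Nat.add N 1 by rewrite /l seq_iota size_iota. rewrite size_map Hs.
    suff : (size Q <= Nat.add N 1)%N by move=> H1 H2; have := leq_trans H2 H1; rewrite ltnn.
    rewrite /Q. apply: leq_trans (size_polyD _ _) _. rewrite geq_max size_polyN. apply/andP; split.
    - rewrite /D. have [->|Pn0] := eqVneq (lagP N tp j) 0%R; first by rewrite deriv0 size_poly0.
      have H1 := lt_size_deriv Pn0.
      have H2 := size_lagprod tp j (List.seq 0 (Nat.add N 1)).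
      have H3 := count_size (fun m => m != j) (List.seq 0 (Nat.add N 1)).
      rewrite seq_iota size_iota in H3. rewrite /lagP seq_iota in H1 *. rewrite seq_iota in H2.
      have H4 := leq_trans H1 H2. rewrite ltnS in H4. apply: leq_trans H4 H3.
    - apply size_sum_le => k Hk. apply: leq_trans (size_scale_leq _ _) _.
      have H2 := size_lagprod tp k (List.seq 0 (Nat.add N 1)).
      have H3 := count_ne_lt k (List.seq 0 (Nat.add N 1)).
      rewrite seq_iota size_iota in H3.
      have Hk' : k \in iota 0 (Nat.add N 1).
      { rewrite mem_iota. move: Hk. rewrite /l in_seq. lia. }
      rewrite seq_iota in H2. rewrite /lagP seq_iota. apply: leq_trans H2 _. exact: H3 Hk'. }
  rewrite Dj -/D {1}HD horner_sum msum_big. apply: eq_big_seq => k Hk.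
  by rewrite hornerZ -lag_horner Dj RmultE.
Qed.


Lemma msum_ord n (F : nat -> R) : msum (List.seq 0 n) F = (\sum_(i < n) F i)%R.
Proof.
  rewrite msum_big seq_iota.
  have -> : iota 0 n = index_iota 0 n by rewrite /index_iota subn0.
  by rewrite big_mkord.
Qed.

Lemma delta_inord n a b : (a < n.+1)%N -> (b < n.+1)%N ->
  delta a b = (1 *+ (@inord n a == @inord n b))%R.
Proof.
  move=> Ha Hb. rewrite /delta. destruct (excluded_middle_informative (a = b)) as [->|ne].
  - by rewrite eqxx.
  - have -> : (@inord n a == @inord n b) = false.
    { apply/eqP => E. apply ne. have := congr1 (@nat_of_ord _) E. by rewrite !inordK. }
    by [].
Qed.

Lemma gram_inv n (G : nat -> nat -> R)
 (H : forall v : nat -> R, (forall j', (j' < n)%coq_nat ->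
        msum (List.seq 0 n) (fun j => Rmult (v j) (G j j')) = 0) ->
      forall j, (j < n)%coq_nat -> v j = 0) :
 exists B, is_inverse (List.seq 0 n) G B.
Proof.
  case: n H => [|n] H.
  { exists (fun _ _ => 0%R). move=> a b Ha. by destruct Ha. }
  pose A : 'M[R]_n.+1 := (\matrix_(i, j) G i j)%R.
  have uA : A \in unitmx.
  { rewrite unitmxE unitfE. apply/negP => /det0P [v vn0 vA].
    move/negP: vn0; apply. apply/eqP/rowP => i. rewrite mxE.
    pose w k := if (k < n.+1)%N then v ord0 (inord k) else 0%R.
    have Hw : forall j, (j < n.+1)%coq_nat -> w j = 0.
    { apply H => j' Hj'. rewrite msum_ord.
      have Hj : (j' < n.+1)%N by apply/ltP.
      have := congr1 (fun M : 'M[R]_(1, n.+1) => M ord0 (@inord n j')) vA. rewrite !mxE => E; apply: (etrans _ E).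
      apply eq_bigr => k _. by rewrite /w ltn_ord inord_val mxE inordK // RmultE. }
    have := Hw i (ltP (ltn_ord i)). by rewrite /w ltn_ord inord_val. }
  exists (fun a b => if (a < n.+1)%N && (b < n.+1)%N then invmx A (inord a) (inord b) else 0%R).
  move=> a b; rewrite !in_seq => Ha Hb.
  have Ha' : (a < n.+1)%N by apply/ltP; lia.
  have Hb' : (b < n.+1)%N by apply/ltP; lia.
  rewrite /mmul !msum_ord (@delta_inord n a b Ha' Hb'). split.
  - have := congr1 (fun M : 'M[R]_n.+1 => M (@inord n a) (@inord n b)) (mulmxV uA). rewrite !mxE => E; apply: (etrans _ E).
    apply eq_bigr => k _. by rewrite Hb' ltn_ord /= inord_val mxE inordK // RmultE.
  - have := congr1 (fun M : 'M[R]_n.+1 => M (@inord n a) (@inord n b)) (mulVmx uA). rewrite !mxE => E; apply: (etrans _ E).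
    apply eq_bigr => k _. by rewrite Ha' ltn_ord /= inord_val mxE inordK // RmultE.
Qed.

Lemma lag_deriv N tp j t : derivable_pt_lim (lag1 N tp j) t (Deriv (lag1 N tp j) t).
Proof.
  have -> : lag1 N tp j = fun y => (lagP N tp j).[y]%R.
  { apply functional_extensionality => y. apply lag_horner. }
  rewrite (Deriv_unique _ _ _ (horner_derive _ t)). apply horner_derive.
Qed.

End MC.


Definition PhiE (v : nat -> R) r s t :=
  v 1%nat * ((1 - r - s) * (1 - t)) + v 2%nat * (r * (1 - t)) + v 3%nat * (s * (1 - t))
  + v 4%nat * ((1 - r - s) * t) + v 5%nat * (r * t) + v 6%nat * (s * t).

Lemma Phic_eq v r s t : Phic v r s t = PhiE v r s t.
Proof. unfold Phic, PhiE. cbn [fold_right vfun]. ring. Qed.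

Lemma dr_Phic v r s t : d_r (Phic v) r s t = (v 2%nat - v 1%nat) * (1 - t) + (v 5%nat - v 4%nat) * t.
Proof.
  unfold d_r. apply Deriv_unique.
  replace (fun u => Phic v u s t) with (fun u => PhiE v u s t)
    by (apply functional_extensionality; intro; now rewrite Phic_eq).
  apply is_derive_Reals. unfold PhiE. auto_derive; [exact I|]. ring.
Qed.

Lemma ds_Phic v r s t : d_s (Phic v) r s t = (v 3%nat - v 1%nat) * (1 - t) + (v 6%nat - v 4%nat) * t.
Proof.
  unfold d_s. apply Deriv_unique.
  replace (fun u => Phic v r u t) with (fun u => PhiE v r u t)
    by (apply functional_extensionality; intro; now rewrite Phic_eq).
  apply is_derive_Reals. unfold PhiE. auto_derive; [exact I|]. ring.
Qed.

Definition ZT (v : nat -> R) r s :=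
  - (v 1%nat * (1 - r - s) + v 2%nat * r + v 3%nat * s) + (v 4%nat * (1 - r - s) + v 5%nat * r + v 6%nat * s).

Lemma dt_Phic v r s t : d_t (Phic v) r s t = ZT v r s.
Proof.
  unfold d_t. apply Deriv_unique.
  replace (fun u => Phic v r s u) with (fun u => PhiE v r s u)
    by (apply functional_extensionality; intro; now rewrite Phic_eq).
  apply is_derive_Reals. unfold PhiE, ZT. auto_derive; [exact I|]. ring.
Qed.

Lemma ball_R (x e y : R) : ball x e y <-> Rabs (y - x) < e.
Proof. reflexivity. Qed.

Definition cst (vx vy : nat -> R) : R :=
  (vx 2%nat - vx 1%nat) * (vy 3%nat - vy 1%nat) - (vx 3%nat - vx 1%nat) * (vy 2%nat - vy 1%nat).

Section Geo.
Variables vx vy vz : nat -> R.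
Hypothesis Hvert : vertically_mapped vx vy.

Lemma dt_X0 r s t : d_t (Phic vx) r s t = 0.
Proof. rewrite dt_Phic. unfold ZT. destruct Hvert as (h1&h2&h3&h4&h5&h6). rewrite <- h1, <- h3, <- h5. ring. Qed.
Lemma dt_Y0 r s t : d_t (Phic vy) r s t = 0.
Proof. rewrite dt_Phic. unfold ZT. destruct Hvert as (h1&h2&h3&h4&h5&h6). rewrite <- h2, <- h4, <- h6. ring. Qed.
Lemma dr_X r s t : d_r (Phic vx) r s t = vx 2%nat - vx 1%nat.
Proof. rewrite dr_Phic. destruct Hvert as (h1&h2&h3&h4&h5&h6). rewrite <- h1, <- h3. ring. Qed.
Lemma dr_Y r s t : d_r (Phic vy) r s t = vy 2%nat - vy 1%nat.
Proof. rewrite dr_Phic. destruct Hvert as (h1&h2&h3&h4&h5&h6). rewrite <- h2, <- h4. ring. Qed.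
Lemma ds_X r s t : d_s (Phic vx) r s t = vx 3%nat - vx 1%nat.
Proof. rewrite ds_Phic. destruct Hvert as (h1&h2&h3&h4&h5&h6). rewrite <- h1, <- h5. ring. Qed.
Lemma ds_Y r s t : d_s (Phic vy) r s t = vy 3%nat - vy 1%nat.
Proof. rewrite ds_Phic. destruct Hvert as (h1&h2&h3&h4&h5&h6). rewrite <- h2, <- h6. ring. Qed.

Lemma Jac_eq r s t : Jac vx vy vz r s t = ZT vz r s * cst vx vy.
Proof.
  unfold Jac. cbv zeta. rewrite dt_X0, dt_Y0, dr_X, dr_Y, ds_X, ds_Y, dt_Phic. unfold cst. ring.
Qed.

Lemma geo_rz0 r s t : geo_rz vx vy vz r s t = 0.
Proof. unfold geo_rz. cbv zeta. rewrite dt_X0, dt_Y0. unfold Rdiv. ring. Qed.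
Lemma geo_sz0 r s t : geo_sz vx vy vz r s t = 0.
Proof. unfold geo_sz. cbv zeta. rewrite dt_X0, dt_Y0. unfold Rdiv. ring. Qed.
Lemma geo_tz_J r s t : Jac vx vy vz r s t <> 0 -> geo_tz vx vy vz r s t * Jac vx vy vz r s t = cst vx vy.
Proof.
  intro H. unfold geo_tz. cbv zeta. rewrite dr_X, dr_Y, ds_X, ds_Y. unfold cst. field. exact H.
Qed.
End Geo.

Lemma Tint_scal k g : Tint (fun r s => k * g r s) = k * Tint g.
Proof.
  unfold Tint.
  replace (fun r => Rint (fun s => k * g r s) 0 (1 - r)) with (fun r => k * Rint (fun s => g r s) 0 (1 - r))
    by (apply functional_extensionality; intro; now rewrite Rint_scal).
  apply Rint_scal.
Qed.

Lemma Wint_sep g h : Wint (fun r s t => g r s * h t) = Tint g * Rint h 0 1.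
Proof.
  unfold Wint.
  replace (fun t => Tint (fun r s => g r s * h t)) with (fun t => Tint g * h t).
  - apply Rint_scal.
  - apply functional_extensionality; intro t. rewrite Rmult_comm, <- Tint_scal.
    f_equal. apply functional_extensionality; intro r. apply functional_extensionality; intro s. ring.
Qed.

Lemma Wint_ext f g : (forall r s t, 0 < r < 1 -> 0 < s < 1 - r -> 0 < t < 1 -> f r s t = g r s t) ->
  Wint f = Wint g.
Proof.
  intro H. unfold Wint. apply Rint_ext; [lra|]. intros t Ht.
  unfold Tint. apply Rint_ext; [lra|]. intros r Hr.
  apply Rint_ext; [lra|]. intros s Hs. apply H; auto.
Qed.

Lemma lag_deriv N tp j t : derivable_pt_lim (lag1 N tp j) t (Deriv (lag1 N tp j) t).
Proof. apply MC.lag_deriv. Qed.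

Lemma lag_ex_derive N tp j t : ex_derive (lag1 N tp j) t.
Proof. exists (Deriv (lag1 N tp j) t). apply is_derive_Reals. apply lag_deriv. Qed.

Lemma ex_derive_msum (l : list nat) (c : nat -> R) (f : nat -> R -> R) t :
  (forall k, ex_derive (f k) t) -> ex_derive (fun x => msum l (fun k => c k * f k x)) t.
Proof.
  intro H. induction l as [|a l IH].
  - change (ex_derive (fun _ : R => 0) t). apply ex_derive_const.
  - apply (ex_derive_plus (fun x => c a * f a x) (fun x => msum l (fun k => c k * f k x))); auto.
    apply ex_derive_scal. auto.
Qed.

Lemma RInt_msum (l : list nat) (c : nat -> R) (f : nat -> R -> R) a b :
  (forall k, In k l -> ex_RInt (f k) a b) ->
  ex_RInt (fun x => msum l (fun k => c k * f k x)) a b /\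
  RInt (fun x => msum l (fun k => c k * f k x)) a b = msum l (fun k => c k * RInt (f k) a b).
Proof.
  intro H. induction l as [|x l IH].
  - change (fun x => msum [] (fun k => c k * f k x)) with (fun _ : R => 0). split. apply ex_RInt_const. rewrite msum_nil. rewrite RInt_const.
    unfold scal; simpl; unfold mult; simpl. ring.
  - destruct IH as [IH1 IH2]. { intros; apply H; right; auto. }
    assert (Hx : ex_RInt (fun y => c x * f x y) a b).
    { exact (ex_RInt_scal (f x) a b (c x) (H x (or_introl eq_refl))). }
    split.
    + exact (ex_RInt_plus _ _ a b Hx IH1).
    + rewrite msum_cons. rewrite <- IH2.
      assert (E := RInt_plus _ _ a b Hx IH1).
      assert (E2 := RInt_scal (f x) a b (c x) (H x (or_introl eq_refl))).
      etransitivity; [exact E|].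
      change (RInt (fun y => c x * f x y) a b + RInt (fun y => msum l (fun k => c k * f k y)) a b
              = c x * RInt (f x) a b + RInt (fun y => msum l (fun k => c k * f k y)) a b).
      f_equal. exact E2.
Qed.

Lemma Rint_msum (l : list nat) (c : nat -> R) (f : nat -> R -> R) a b :
  (forall k, In k l -> ex_RInt (f k) a b) ->
  Rint (fun x => msum l (fun k => c k * f k x)) a b = msum l (fun k => c k * Rint (f k) a b).
Proof.
  intro H. destruct (RInt_msum l c f a b H) as [H1 H2].
  rewrite Rint_ex by auto. rewrite H2. apply msum_ext. intros k Hk. rewrite Rint_ex; auto.
Qed.

Lemma ex_RInt_der (f : R -> R) a b : (forall t, ex_derive f t) -> ex_RInt f a b.
Proof. intro H. exact (ex_RInt_continuous f a b (fun z _ => ex_derive_continuous f z (H z))). Qed.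

Lemma RInt_nonneg_zero (f : R -> R) :
  (forall x, continuous f x) -> (forall x, 0 <= f x) -> RInt f 0 1 = 0 ->
  forall x, 0 <= x <= 1 -> f x = 0.
Proof.
  intros Hc Hp H0 x0 Hx0.
  destruct (Rle_lt_or_eq_dec 0 (f x0) (Hp x0)) as [Hlt|Heq]; [|auto].
  exfalso.
  assert (He : 0 < f x0 / 2) by lra.
  destruct (Hc x0 (ball (f x0) (mkposreal _ He)) (locally_ball _ _)) as [d Hd].
  set (al := Rmax 0 (x0 - d / 2)). set (be := Rmin 1 (x0 + d / 2)).
  assert (Hd0 := cond_pos d).
  assert (Hab : al < be).
  { unfold al, be. apply Rmax_lub_lt; apply Rmin_glb_lt; lra. }
  assert (H0a : 0 <= al) by apply Rmax_l.
  assert (Hb1 : be <= 1) by apply Rmin_l.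
  assert (Hex : forall a b, ex_RInt f a b) by (intros a b; exact (ex_RInt_continuous f a b (fun z _ => Hc z))).
  assert (E1 : RInt f 0 1 = RInt f 0 al + (RInt f al be + RInt f be 1)).
  { rewrite <- (RInt_Chasles f 0 al 1) by auto. rewrite <- (RInt_Chasles f al be 1) by auto. reflexivity. }
  assert (P1 : 0 <= RInt f 0 al) by (apply RInt_ge_0; auto).
  assert (P3 : 0 <= RInt f be 1) by (apply RInt_ge_0; auto).
  assert (P2 : 0 < RInt f al be).
  { apply RInt_gt_0; auto. intros y Hy.
    assert (Hyb : ball x0 d y).
    { apply ball_R. unfold al, be in Hy.
      assert (x0 - d/2 < y) by (eapply Rle_lt_trans; [apply Rmax_r|apply Hy]).
      assert (y < x0 + d/2) by (eapply Rlt_le_trans; [apply Hy|apply Rmin_r]).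
      apply Rabs_def1; lra. }
    specialize (Hd y Hyb). apply ball_R in Hd. simpl in Hd.
    apply Rabs_def2 in Hd. unfold minus, plus, opp in Hd; simpl in Hd. lra. }
  lra.
Qed.


Lemma delta_pair {I J : Type} (i i' : I) (j j' : J) : delta (i, j) (i', j') = delta i i' * delta j j'.
Proof.
  unfold delta.
  destruct (excluded_middle_informative ((i, j) = (i', j'))) as [E|E];
  destruct (excluded_middle_informative (i = i')) as [E1|E1];
  destruct (excluded_middle_informative (j = j')) as [E2|E2];
  try (inversion E; subst; tauto); try (subst; tauto); ring.
Qed.

Lemma msum_fact {I J : Type} (l1 : list I) (l2 : list J) (X : I -> R) (Y : J -> R) :
  msum l1 (fun i => msum l2 (fun j => X i * Y j)) = msum l1 X * msum l2 Y.
Proof.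
  rewrite (msum_ext l1 _ (fun i => X i * msum l2 Y)) by (intros; apply msum_scal_l).
  apply msum_scal_r.
Qed.

Lemma kron_inverse {I J : Type} (l1 : list I) (l2 : list J) A Ai B Bi :
  is_inverse l1 A Ai -> is_inverse l2 B Bi -> is_inverse (list_prod l1 l2) (fun a b => A (fst a) (fst b) * B (snd a) (snd b))
     (fun a b => Ai (fst a) (fst b) * Bi (snd a) (snd b)).
Proof.
  intros HA HB [i j] [i' j'] Ha Hb. apply in_prod_iff in Ha, Hb.
  destruct Ha as [Hi Hj], Hb as [Hi' Hj'].
  unfold mmul. rewrite !msum_prod. cbn [fst snd]. rewrite delta_pair.
  destruct (HA i i' Hi Hi') as [HA1 HA2]. destruct (HB j j' Hj Hj') as [HB1 HB2].
  unfold mmul in *. split.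
  - rewrite <- HA1, <- HB1, <- msum_fact. apply msum_ext; intros; apply msum_ext; intros; ring.
  - rewrite <- HA2, <- HB2, <- msum_fact. apply msum_ext; intros; apply msum_ext; intros; ring.
Qed.

Lemma kron_inv_back {I J : Type} (l1 : list I) (l2 : list J) (j0 : J) A B X :
  NoDup l1 -> In j0 l2 ->
  is_inverse (list_prod l1 l2) (fun a b => A (fst a) (fst b) * B (snd a) (snd b)) X ->
  exists Ai, is_inverse l1 A Ai.
Proof.
  intros Hnd Hj0 HX.
  set (Rm := fun i i'' => msum l2 (fun j => B j0 j * X (i, j) (i'', j0))).
  set (Lm := fun i i'' => msum l2 (fun j' => X (i, j0) (i'', j') * B j' j0)).
  assert (HdJ : delta j0 j0 = 1) by (unfold delta; destruct (excluded_middle_informative (j0 = j0)); tauto).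
  assert (HAR : forall i i'', In i l1 -> In i'' l1 -> mmul l1 A Rm i i'' = delta i i'').
  { intros i i'' Hi Hi''.
    destruct (HX (i, j0) (i'', j0)) as [H1 _]; try (apply in_prod; auto).
    rewrite delta_pair, HdJ, Rmult_1_r in H1. rewrite <- H1.
    unfold mmul, Rm. rewrite msum_prod. apply msum_ext; intros i' _.
    rewrite <- msum_scal_l. apply msum_ext; intros; cbn [fst snd]; ring. }
  assert (HLA : forall i i'', In i l1 -> In i'' l1 -> mmul l1 Lm A i i'' = delta i i'').
  { intros i i'' Hi Hi''.
    destruct (HX (i, j0) (i'', j0)) as [_ H1]; try (apply in_prod; auto).
    rewrite delta_pair, HdJ, Rmult_1_r in H1. rewrite <- H1.
    unfold mmul, Lm. rewrite msum_prod. apply msum_ext; intros i' _.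
    rewrite <- msum_scal_r. apply msum_ext; intros; cbn [fst snd]; ring. }
  assert (HLR : forall i i'', In i l1 -> In i'' l1 -> Rm i i'' = Lm i i'').
  { intros i i'' Hi Hi''.
    transitivity (mmul l1 (mmul l1 Lm A) Rm i i'').
    - unfold mmul at 1. rewrite <- (msum_delta_l l1 (fun k => Rm k i'') i) by auto.
      apply msum_ext; intros k Hk. rewrite HLA; auto.
    - rewrite mmul_assoc. unfold mmul at 1. rewrite <- (msum_delta_r l1 (fun k => Lm i k) i'') by auto.
      apply msum_ext; intros k Hk. rewrite HAR; auto. }
  exists Rm. intros i i'' Hi Hi''. split; auto.
  rewrite <- HLA by auto. unfold mmul. apply msum_ext; intros k Hk. rewrite HLR; auto.
Qed.

Section Lag.
Variables (N : nat) (tp : nat -> R).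
Hypothesis Hg : GLL N tp.

Lemma tp_inc a b : (a < b)%nat -> (b <= N)%nat -> tp a < tp b.
Proof.
  destruct Hg as (H0 & HN & Hinc & _).
  induction b as [|b IH]; intros Hab HbN; [lia|].
  assert (tp b < tp (S b)) by (apply Hinc; lia).
  destruct (Nat.eq_dec a b) as [->|Hne]; auto.
  assert (tp a < tp b) by (apply IH; lia). lra.
Qed.

Lemma tp_inj a b : (a <= N)%nat -> (b <= N)%nat -> tp a = tp b -> a = b.
Proof.
  intros Ha Hb E. destruct (Nat.lt_total a b) as [H|[H|H]]; auto.
  - assert (tp a < tp b) by (apply tp_inc; lia). lra.
  - assert (tp b < tp a) by (apply tp_inc; lia). lra.
Qed.

Lemma tp_range m : (m <= N)%nat -> 0 <= tp m <= 1.
Proof.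
  intro Hm. destruct Hg as (H0 & HN & _ & _).
  split.
  - destruct m. lra. assert (tp 0%nat < tp (S m)) by (apply tp_inc; lia). lra.
  - destruct (Nat.eq_dec m N) as [->|Hne]. lra.
    assert (tp m < tp N) by (apply tp_inc; lia). lra.
Qed.

Lemma lag_delta k m : (k <= N)%nat -> (m <= N)%nat -> lag1 N tp k (tp m) = delta k m.
Proof.
  intros Hk Hm. unfold lag1, delta.
  destruct (excluded_middle_informative (k = m)) as [<-|Hne].
  - assert (Hl : forall l, (forall x, In x l -> (x <= N)%nat) ->
      fold_right (fun m0 acc => (if Nat.eq_dec m0 k then 1 else (tp k - tp m0) / (tp k - tp m0)) * acc) 1 l = 1).
    { induction l as [|x l IH]; intro H; [reflexivity|]. cbn [fold_right].
      rewrite IH by (intros; apply H; right; auto).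
      destruct (Nat.eq_dec x k) as [_|Hxk]; [ring|].
      assert (tp k - tp x <> 0).
      { intro E. apply Hxk. apply tp_inj; auto. apply H; left; auto. lra. }
      field; auto. }
    apply Hl. intros x Hx. apply in_seq in Hx. lia.
  - assert (Hl : forall l, In m l ->
      fold_right (fun m0 acc => (if Nat.eq_dec m0 k then 1 else (tp m - tp m0) / (tp k - tp m0)) * acc) 1 l = 0).
    { induction l as [|x l IH]; intro H; [destruct H|]. cbn [fold_right].
      destruct H as [->|H].
      - destruct (Nat.eq_dec m k) as [E|_]; [subst; tauto|]. unfold Rdiv. ring.
      - rewrite IH by auto. ring. }
    apply Hl. apply in_seq. lia.
Qed.

Definition Gm (j j' : nat) := Rint (fun t => lag1 N tp j t * lag1 N tp j' t) 0 1.
Definition Bm (j j' : nat) := Rint (fun t => Deriv (lag1 N tp j') t * lag1 N tp j t) 0 1.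

Lemma ex_RInt_lag2 j k : ex_RInt (fun t => lag1 N tp j t * lag1 N tp k t) 0 1.
Proof. apply ex_RInt_der. intro t. apply ex_derive_mult; apply lag_ex_derive. Qed.

Lemma Bm_eq j j' : Bm j j' = msum (seq 0 (N + 1)) (fun k => Gm j k * D1D N tp k j').
Proof.
  unfold Bm.
  replace (fun t => Deriv (lag1 N tp j') t * lag1 N tp j t)
    with (fun t => msum (seq 0 (N + 1)) (fun k => D1D N tp k j' * (fun k t => lag1 N tp j t * lag1 N tp k t) k t)).
  - rewrite Rint_msum. apply msum_ext; intros; unfold Gm; ring.
    intros; apply ex_RInt_lag2.
  - apply functional_extensionality; intro t.
    rewrite (MC.lag_interp N tp tp_inj lag_delta j' t). rewrite <- msum_scal_r.
    apply msum_ext; intros; unfold D1D; ring.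
Qed.

Lemma Gm_inv : exists Bi, is_inverse (seq 0 (N + 1)) Gm Bi.
Proof.
  apply MC.gram_inv. intros v Hv j Hj.
  set (l := seq 0 (N + 1)).
  set (q := fun t => msum l (fun k => v k * lag1 N tp k t)).
  assert (Hqd : forall t, ex_derive q t).
  { intro t. apply ex_derive_msum. intros; apply lag_ex_derive. }
  assert (E1 : forall j', msum l (fun j => v j * Gm j j') = Rint (fun t => q t * lag1 N tp j' t) 0 1).
  { intro j'. unfold Gm. rewrite <- (Rint_msum l v (fun j t => lag1 N tp j t * lag1 N tp j' t)).
    - f_equal. apply functional_extensionality; intro t. unfold q. rewrite <- msum_scal_r.
      apply msum_ext; intros; ring.
    - intros; apply ex_RInt_lag2. }
  assert (E2 : msum l (fun j' => v j' * msum l (fun j => v j * Gm j j')) = 0).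
  { rewrite (msum_ext l _ (fun _ => 0)). apply msum_zero.
    intros k Hk. rewrite Hv. ring. apply in_seq in Hk. lia. }
  assert (E3 : Rint (fun t => q t * q t) 0 1 = 0).
  { transitivity (msum l (fun j' => v j' * msum l (fun j => v j * Gm j j'))); [|exact E2].
    rewrite (msum_ext l _ (fun j' => v j' * Rint (fun t => q t * lag1 N tp j' t) 0 1))
      by (intros; rewrite E1; auto).
    rewrite <- (Rint_msum l v (fun j' t => q t * lag1 N tp j' t)).
    - f_equal. apply functional_extensionality; intro t. unfold q. rewrite <- msum_scal_l.
      apply msum_ext; intros; ring.
    - intros; apply ex_RInt_der. intro t. apply ex_derive_mult; auto. apply lag_ex_derive. }
  rewrite Rint_ex in E3 by (apply ex_RInt_der; intro t; apply ex_derive_mult; auto).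
  assert (Hz := RInt_nonneg_zero (fun t => q t * q t)
     (fun x => ex_derive_continuous _ _ (ex_derive_mult q q x (Hqd x) (Hqd x)))
     (fun x => Rle_0_sqr (q x)) E3 (tp j) (tp_range j ltac:(lia))).
  assert (Hq0 : q (tp j) = 0) by (destruct (Rmult_integral _ _ Hz); auto).
  unfold q in Hq0.
  rewrite (msum_ext l _ (fun k => v k * delta k j)) in Hq0.
  - rewrite msum_delta_r in Hq0; auto. apply seq_NoDup. apply in_seq; lia.
  - intros k Hk. rewrite lag_delta; auto. apply in_seq in Hk; lia. lia.
Qed.

End Lag.


Lemma Mk_eq N tp ltri vx vy vz (Hvert : vertically_mapped vx vy) :
  Mk N tp ltri vx vy vz = kron (Mtrik ltri vx vy vz) (Gm N tp).
Proof.
  apply functional_extensionality; intro a. apply functional_extensionality; intro b.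
  unfold Mk, kron, Mtrik, Gm, lbasis.
  replace (fun r s t => ltri (fst a) r s * lag1 N tp (snd a) t * (ltri (fst b) r s * lag1 N tp (snd b) t) *
                        Jac vx vy vz r s t)
    with (fun r s t => (fun r s => ltri (fst a) r s * ltri (fst b) r s * Jac vx vy vz r s 0) r s *
                       (fun t => lag1 N tp (snd a) t * lag1 N tp (snd b) t) t).
  - apply Wint_sep.
  - apply functional_extensionality; intro r. apply functional_extensionality; intro s.
    apply functional_extensionality; intro t.
    rewrite (Jac_eq vx vy vz Hvert r s t), (Jac_eq vx vy vz Hvert r s 0). ring.
Qed.

Lemma Szk_eq N tp ltri vx vy vz (Hvert : vertically_mapped vx vy)
  (HJ : forall r s t, inW r s t -> 0 < Jac vx vy vz r s t) a b :
  Szk N tp ltri vx vy vz a b = cst vx vy * kron (Mhattri ltri) (Bm N tp) a b.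
Proof.
  unfold Szk.
  rewrite (Wint_ext _ (fun r s t => (fun r s => cst vx vy * (ltri (fst a) r s * ltri (fst b) r s)) r s *
              (fun t => Deriv (lag1 N tp (snd b)) t * lag1 N tp (snd a) t) t)).
  - rewrite Wint_sep, Tint_scal. unfold kron, Mhattri, Bm. ring.
  - intros r s t Hr Hs Ht.
    assert (HW : inW r s t) by (unfold inW, inT; lra).
    assert (HJ0 := HJ r s t HW).
    unfold dz_ref. rewrite (geo_rz0 vx vy vz Hvert), (geo_sz0 vx vy vz Hvert).
    assert (Hdt : d_t (lbasis N tp ltri b) r s t = ltri (fst b) r s * Deriv (lag1 N tp (snd b)) t).
    { unfold d_t, lbasis. apply Deriv_unique.
      exact (derivable_pt_lim_scal (lag1 N tp (snd b)) (ltri (fst b) r s) t _ (lag_deriv N tp (snd b) t)). }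
    rewrite Hdt. rewrite <- (geo_tz_J vx vy vz Hvert r s t) by lra. unfold lbasis. ring.
Qed.

Theorem mainTheorem6
  (N : nat) (HN : (1 <= N)%nat)
  (vx vy vz : nat -> R)
  (Hvert : vertically_mapped vx vy)
  (HJ : forall r s t, inW r s t -> 0 < Jac vx vy vz r s t)
  (rp sp : nat -> R)
  (Hpts : forall i, (i < Np N)%nat -> inT (rp i) (sp i))
  (Huni : unisolvent N rp sp)
  (ltri : nat -> R -> R -> R) (Hlag : lagrange_tri N rp sp ltri)
  (tp : nat -> R) (Hgll : GLL N tp) :
  exists c : R,
    (forall r s t, inW r s t -> geo_tz vx vy vz r s t * Jac vx vy vz r s t = c) /\
    (forall a b, In a (idx_W N) -> In b (idx_W N) ->
       Dzk N tp ltri vx vy vz a b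
       = kron (Ltrik N ltri vx vy vz) (fun j j' => c * D1D N tp j j') a b).
Proof.
  exists (cst vx vy). split.
  { intros r s t HW. apply geo_tz_J; auto. assert (H := HJ r s t HW). lra. }
  intros [i j] [i2 j2] Ha Hb.
  set (l1 := idx_tri N). set (l2 := seq 0 (N + 1)).
  set (A := Mtrik ltri vx vy vz).
  assert (HW : idx_W N = list_prod l1 l2) by reflexivity.
  assert (Hnd1 : NoDup l1) by apply seq_NoDup.
  assert (Hnd2 : NoDup l2) by apply seq_NoDup.
  assert (HndW : NoDup (idx_W N)) by (rewrite HW; apply NoDup_prod; auto).
  unfold Dzk. rewrite (Mk_eq N tp ltri vx vy vz Hvert). fold A.
  destruct (classic (exists B, is_inverse l1 A B)) as [HA|HA].
  - assert (HAi := minv_spec l1 A HA).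
    destruct (Gm_inv N tp Hgll) as [Gi0 HG0].
    assert (HGi := minv_spec l2 (Gm N tp) (ex_intro _ Gi0 HG0)).
    set (Ai := minv l1 A) in *. set (Gi := minv l2 (Gm N tp)) in *.
    assert (Hk : is_inverse (idx_W N) (kron A (Gm N tp)) (kron Ai Gi))
      by (rewrite HW; apply kron_inverse; auto).
    assert (HX := minv_spec (idx_W N) (kron A (Gm N tp)) (ex_intro _ _ Hk)).
    assert (Hu := inverse_unique (idx_W N) _ _ _ HndW HX Hk).
    unfold mmul at 1.
    rewrite (msum_ext _ _ (fun k => kron Ai Gi (i, j) k * (cst vx vy * kron (Mhattri ltri) (Bm N tp) k (i2, j2)))).
    2:{ intros k Hkin. rewrite Hu by auto. rewrite Szk_eq; auto. }
    rewrite HW, msum_prod. unfold kron. cbn [fst snd].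
    rewrite (msum_ext l1 _ (fun i' => msum l2 (fun j' => (Ai i i' * Mhattri ltri i' i2) *
                 (cst vx vy * (Gi j j' * Bm N tp j' j2)))))
      by (intros; apply msum_ext; intros; ring).
    rewrite msum_fact. unfold Ltrik. fold l1. fold A. fold Ai. f_equal.
    rewrite msum_scal_l. f_equal.
    apply in_prod_iff in Ha, Hb. destruct Ha as [_ Hj], Hb as [_ Hj2].
    rewrite (msum_ext l2 _ (fun j' => Gi j j' * mmul l2 (Gm N tp) (D1D N tp) j' j2))
      by (intros; unfold mmul; rewrite Bm_eq; auto).
    change (mmul l2 Gi (mmul l2 (Gm N tp) (D1D N tp)) j j2 = D1D N tp j j2).
    rewrite <- mmul_assoc. unfold mmul at 1.
    rewrite (msum_ext l2 _ (fun k => delta j k * D1D N tp k j2)).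
    + exact (msum_delta_l l2 (fun k => D1D N tp k j2) j Hnd2 Hj).
    + intros k Hk0. f_equal. apply (HGi j k Hj Hk0).
  - assert (HnX : ~ exists X, is_inverse (idx_W N) (kron A (Gm N tp)) X).
    { intros [X HX]. apply HA. rewrite HW in HX.
      apply (kron_inv_back l1 l2 0%nat A (Gm N tp) X Hnd1); auto.
      unfold l2. apply in_seq. lia. }
    rewrite (minv_none _ _ HnX).
    unfold Ltrik. fold l1. fold A. rewrite (minv_none _ _ HA).
    unfold mmul, kron. cbn [fst snd].
    rewrite (msum_ext (idx_W N) _ (fun _ => 0)) by (intros; ring).
    rewrite (msum_ext l1 _ (fun _ => 0)) by (intros; ring). rewrite !msum_zero. ring.
Qed.
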